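(* Let $r\ge1$. Let $B_r$ be the $r\times 2r$ matrix with rows indexed $1,\dots,r$ and columns indexed $0,\dots,2r-1$, whose $(k,c)$ entry is $-1$ if $c=r-k$, $1$ if $c=r-1+k$, and $0$ otherwise. Let $C_r$ be the $r\times(2r+1)$ matrix with rows indexed $1,\dots,r$ and columns indexed $0,\dots,2r$, whose $(k,c)$ entry is $-1$ if $c=r-k$, $1$ if $c=r+k$, and $0$ otherwise. For a partition $\lambda$ with $l(\lambda)\le r$ put $I(\lambda)=\{\lambda_r,\lambda_{r-1}+1,\dots,\lambda_1+r-1\}$, and for a matrix $M$ whose column index set contains $I(\lambda)$ let $\Delta_{I(\lambda)}(M)$ be the $r\times r$ submatrix formed by the columns indexed by $I(\lambda)$ in increasing order. Then: (1) for every partition $\lambda$ with $l(\lambda)\le r$ and $\lambda_1\le r$, $$\det\Delta_{I(\lambda)}(B_r)=\begin{cases}(-1)^{\binom{r+1}2+(|\lambda|+p(\lambda))/2}&\text{if }\lambda\in\mathcal R_r,\\0&\text{otherwise;}\end{cases}$$ (2) for every partition $\lambda$ with $l(\lambda)\le r$ and $\lambda_1\le r+1$, $$\det\Delta_{I(\lambda)}(C_r)=\begin{cases}(-1)^{\binom{r+1}2+|\lambda|/2}&\text{if }\lambda\in\mathcal Q_r,\\0&\text{otherwise.}\end{cases}$$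
   Context: Partitions: a partition $\lambda=(\lambda_1\ge\lambda_2\ge\cdots)$ of nonnegative integers with finitely many nonzero parts; $l(\lambda)$ is the number of nonzero parts, $|\lambda|=\sum_i\lambda_i$. In Frobenius notation $\lambda=(\alpha_1,\dots,\alpha_d\,|\,\beta_1,\dots,\beta_d)$ where $d=p(\lambda)=\#\{i:\lambda_i\ge i\}$, $\alpha_i=\lambda_i-i$, $\beta_i=\lambda'_i-i$ ($\lambda'$ the conjugate partition). For an integer $m\ge0$, $\mathcal Q_m$ is the set of partitions with $l(\lambda)\le m$ of the form $(\alpha_1+1,\dots,\alpha_d+1\,|\,\alpha_1,\dots,\alpha_d)$, and $\mathcal R_m$ is the set of partitions with $l(\lambda)\le m$ of the form $(\alpha_1,\dots,\alpha_d\,|\,\alpha_1,\dots,\alpha_d)$ (the empty partition included in both). *)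

(* Defs.v *)
From mathcomp Require Import all_boot all_order all_algebra.
Set Implicit Arguments. Unset Strict Implicit. Unset Printing Implicit Defensive.
Import GRing.Theory Num.Theory.

Definition is_partition (lam : seq nat) : bool :=
  sorted geq lam && all (fun x => 0 < x) lam.

(* lambda_i, for i >= 1 (0 beyond the length) *)
Definition part (lam : seq nat) (i : nat) : nat := nth 0 lam i.-1.

(* l(lambda) = size lam ; |lambda| = sumn lam *)

Definition conjp (lam : seq nat) (i : nat) : nat := count (fun x => i <= x) lam.

(* p(lambda) = #{i >= 1 : lambda_i >= i} *)
Definition durfee (lam : seq nat) : nat :=
  count (fun i => i <= part lam i) (iota 1 (size lam)).

Definition frob_alpha (lam : seq nat) (i : nat) : nat := part lam i - i.
Definition frob_beta (lam : seq nat) (i : nat) : nat := conjp lam i - i.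

(* R_m : l(lambda) <= m and lambda = (a_1..a_d | a_1..a_d) *)
Definition inR (m : nat) (lam : seq nat) : bool :=
  (size lam <= m) &&
  all (fun i => frob_alpha lam i == frob_beta lam i) (iota 1 (durfee lam)).

(* Q_m : l(lambda) <= m and lambda = (a_1+1..a_d+1 | a_1..a_d) *)
Definition inQ (m : nat) (lam : seq nat) : bool :=
  (size lam <= m) &&
  all (fun i => frob_alpha lam i == (frob_beta lam i).+1) (iota 1 (durfee lam)).

Definition Bentry (r k c : nat) : int :=
  if c == r - k then (-1)%R else if c == (r - 1 + k)%N then 1%R else 0%R.
Definition Centry (r k c : nat) : int :=
  if c == r - k then (-1)%R else if c == (r + k)%N then 1%R else 0%R.

(* B_r : r x 2r, C_r : r x (2r+1); row i : 'I_r stands for k = i+1 *)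
Definition Bmx (r : nat) : 'M[int]_(r, (2 * r)%N) :=
  \matrix_(i < r, c < (2 * r)%N) Bentry r i.+1 c.
Definition Cmx (r : nat) : 'M[int]_(r, (2 * r).+1) :=
  \matrix_(i < r, c < (2 * r).+1) Centry r i.+1 c.

(* j-th (0-based) element of I(lambda) in increasing order: lambda_{r-j} + j *)
Definition Icol (lam : seq nat) (r j : nat) : nat := (part lam (r - j) + j)%N.

(* Delta_{I(lambda)}(M): columns of M indexed by I(lambda), increasing order.
   (Out-of-range columns, which never occur under the theorem's hypotheses,
   are filled with 0.) *)
Definition Delta (r n : nat) (M : 'M[int]_(r, n)) (lam : seq nat) : 'M[int]_r :=
  \matrix_(i < r, j < r)
    match (insub (Icol lam r j) : option 'I_n) with
    | Some c => M i c
    | None => 0%R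
    end.

(* Main.v *)
Require Import Defs.
From mathcomp Require Import all_boot all_order all_algebra zify.
Set Implicit Arguments. Unset Strict Implicit.

Lemma sorted_cons_le x s : sorted geq (x :: s) -> all (fun y => y <= x) s.
Proof.
have tr : transitive geq by move=> a b c /= h1 h2; apply: leq_trans h2 h1.
rewrite /= (path_sortedE tr) => /andP[H _]; exact: H.
Qed.

Lemma sorted_tl x s : sorted geq (x :: s) -> sorted geq s.
Proof. by case: s => //= y s /andP[]. Qed.

Definition hook (lam : seq nat) : seq nat := [seq x.-1 | x <- behead lam & 1 < x].

Lemma nth_hook_aux s n : sorted geq s ->
  nth 0 [seq x.-1 | x <- s & 1 < x] n = (nth 0 s n).-1.
Proof.
elim: s n => [|x s IH] n /=; first by rewrite !nth_nil.
move=> Hs; have Hall := sorted_cons_le Hs.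
have Hs' := sorted_tl Hs.
case: ifP => Hx.
  by case: n => [|n] //=; rewrite IH.
have Hf : [seq y <- s | 1 < y] = [::].
  apply/eqP; rewrite -size_eq0 size_filter -leqn0 leqNgt -has_count.
  by apply/hasPn => y /(allP Hall) /=; lia.
rewrite Hf nth_nil; case: n => [|n] /=; first lia.
have [Hn|Hn] := ltnP n (size s).
  by have := allP Hall _ (mem_nth 0 Hn) => /=; lia.
by rewrite nth_default.
Qed.

Lemma part_hook lam i : is_partition lam -> 1 <= i -> part (hook lam) i = (part lam i.+1).-1.
Proof.
case/andP=> Hs _ Hi; rewrite /part /hook nth_hook_aux.
  by rewrite nth_behead prednK.
by case: lam Hs => //= x s; apply: sorted_tl.
Qed.

Lemma size_hook lam : size (hook lam) <= (size lam).-1.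
Proof. by rewrite /hook size_map size_filter -size_behead count_size. Qed.

Lemma hook_partition lam : is_partition lam -> is_partition (hook lam).
Proof.
case/andP=> Hs Hp; apply/andP; split.
  rewrite /hook; apply: (homo_sorted (e := geq)).
    by move=> a b /=; lia.
  apply: sorted_filter; first by move=> a b c /= h1 h2; apply: leq_trans h2 h1.
  by case: lam Hs {Hp} => //= x s; apply: sorted_tl.
apply/allP => y /mapP[z]; rewrite mem_filter => /andP[Hz _] ->; lia.
Qed.

Lemma sumn_hook_aux s : all (fun y => 0 < y) s ->
  sumn s = sumn [seq y.-1 | y <- s & 1 < y] + size s.
Proof.
elim: s => //= y s IH /andP[Hy Hs]; rewrite (IH Hs).
case: ifP => /= H; lia.
Qed.

Lemma sumn_hook x s : is_partition (x :: s) ->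
  sumn (x :: s) = x + sumn (hook (x :: s)) + size s.
Proof.
case/andP=> _ /= /andP[_ Hp]; rewrite /hook /= (sumn_hook_aux Hp); lia.
Qed.

Lemma conjp_hook x s i : 1 <= i ->
  conjp (hook (x :: s)) i = count (fun y => i.+1 <= y) s.
Proof.
move=> Hi; rewrite /conjp /hook /= count_map count_filter.
by apply: eq_count => y /=; apply/andP/idP => [[]|]; lia.
Qed.

Lemma durfee_ext lam N : size lam <= N ->
  count (fun i => i <= part lam i) (iota 1 N) = durfee lam.
Proof.
move=> HN; rewrite -(subnKC HN) iotaD count_cat /durfee.
rewrite (@eq_in_count _ _ pred0 (iota (1 + size lam) _)) ?count_pred0 ?addn0 //.
move=> i; rewrite mem_iota => /andP[H1 _] /=.
rewrite /part nth_default; lia.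
Qed.


Lemma iota1S n : iota 1 n.+1 = 1 :: [seq i.+1 | i <- iota 1 n].
Proof. by rewrite /= -(iotaDl 1 1). Qed.

Lemma durfee_hook x s : is_partition (x :: s) ->
  durfee (x :: s) = (durfee (hook (x :: s))).+1.
Proof.
move=> Hl; have Hx : 0 < x by case/andP: Hl => _ /= /andP[].
rewrite {1}/durfee [size _]/= iota1S /= {1}/part /= Hx add1n; congr S.
rewrite count_map -(@durfee_ext (hook (x :: s)) (size s)); last first.
  by have := size_hook (x :: s).
apply: eq_in_count => i; rewrite mem_iota => /andP[Hi _] /=.
rewrite (part_hook Hl Hi) /part /=; case: i Hi => // i _ /=; lia.
Qed.

Definition condG (e : bool) lam i := frob_alpha lam i == frob_beta lam i + e.

Lemma cond_hook e x s i : is_partition (x :: s) -> 1 <= i ->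
  condG e (x :: s) i.+1 = condG e (hook (x :: s)) i.
Proof.
move=> Hl Hi; have Hall := sorted_cons_le (proj1 (andP Hl)).
rewrite /condG /frob_alpha /frob_beta (part_hook Hl Hi) (conjp_hook x s Hi).
have -> : part (x :: s) i.+1 - i.+1 = (part (x :: s) i.+1).-1 - i by lia.
congr (_ == _ + _).
rewrite /conjp /=.
case: (leqP i.+1 x) => Hx; first by rewrite add1n.
rewrite add0n (@eq_in_count _ _ pred0) ?count_pred0 // => y /(allP Hall) /=; lia.
Qed.

Lemma conjp1 lam : is_partition lam -> conjp lam 1 = size lam.
Proof.
case/andP=> _ Hp; rewrite /conjp -count_predT; apply: eq_in_count => y /(allP Hp) //.
Qed.

Lemma all_cond_hook e x s : is_partition (x :: s) ->
  all (condG e (x :: s)) (iota 1 (durfee (x :: s))) =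
  (x == (size s).+1 + e) && all (condG e (hook (x :: s))) (iota 1 (durfee (hook (x :: s)))).
Proof.
move=> Hl; have Hx : 0 < x by case/andP: Hl => _ /= /andP[].
rewrite durfee_hook // iota1S /= all_map; congr andb.
  rewrite /condG /frob_alpha /frob_beta conjp1 // /part /=; lia.
apply: eq_in_all => i; rewrite mem_iota => /andP[Hi _] /=; exact: cond_hook.
Qed.
Import GRing.Theory.

Definition E (e : bool) (r k c : nat) : int :=
  if c == r - k then (-1)%R else if c == (r - 1 + k + e)%N then 1%R else 0%R.

Definition D (e : bool) (r : nat) (lam : seq nat) : 'M[int]_r :=
  \matrix_(i < r, j < r) E e r i.+1 (Icol lam r j).

Lemma E_shift e r k c : 1 <= k <= r -> E e r.+1 k c.+1 = E e r k c.
Proof.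
move=> /andP[H1 H2]; rewrite /E.
have -> : (c.+1 == r.+1 - k) = (c == r - k) by apply/eqP/eqP; lia.
have -> : (c.+1 == r.+1 - 1 + k + e) = (c == r - 1 + k + e) by apply/eqP/eqP; lia.
by [].
Qed.

Lemma det_col0 n (A : 'M[int]_n) (j : 'I_n) : (forall i, A i j = 0%R) -> (\det A = 0)%R.
Proof.
move=> H; rewrite (expand_det_col _ j) big1 // => i _; by rewrite H mul0r.
Qed.

Lemma det_row0 n (A : 'M[int]_n) (i : 'I_n) : (forall j, A i j = 0%R) -> (\det A = 0)%R.
Proof.
move=> H; rewrite (expand_det_row _ i) big1 // => j _; by rewrite H mul0r.
Qed.

Lemma part_big lam t : size lam < t -> part lam t = 0.
Proof. by case: t => // n H; rewrite /part nth_default. Qed.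

Lemma part_pos lam t : is_partition lam -> 1 <= t <= size lam -> 0 < part lam t.
Proof.
case/andP=> _ Hp /andP[H1 H2]; rewrite /part.
by apply: (allP Hp); apply: mem_nth; case: t H1 H2.
Qed.

Lemma part_le1 lam t : is_partition lam -> 1 <= t -> part lam t <= part lam 1.
Proof.
case/andP=> Hs _; case: lam Hs => [|x s] Hs Ht; first by rewrite /part !nth_nil.
have Hall := sorted_cons_le Hs.
rewrite /part /=; case: t Ht => // [[|n]] _ //=.
have [Hn|Hn] := ltnP n (size s); first exact: (allP Hall _ (mem_nth 0 Hn)).
by rewrite nth_default.
Qed.

Lemma detA e r lam : size lam <= r ->
  (\det (D e r.+1 lam) = (-1) ^+ r.+1 * \det (D e r lam))%R.
Proof.
move=> Hs; rewrite (expand_det_col _ ord0) (bigD1 ord_max) //= big1 ?addr0; last first.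
  move=> i Hi; rewrite mxE /Icol subn0 addn0 part_big; last lia.
  have Hi' : (i : nat) < r by move: Hi (ltn_ord i); rewrite -val_eqE /=; lia.
  rewrite /E; case: ifP => [/eqP|_]; first lia.
  by case: ifP => [/eqP|_]; [lia| rewrite mul0r].
rewrite mxE /Icol subn0 addn0 part_big; last lia.
rewrite /E subnn eqxx /cofactor /= addn0 mulrA -exprS; congr GRing.mul.
congr determinant; apply/matrixP => i j; rewrite !mxE.
have -> : (lift ord_max i : nat) = i by rewrite /= /bump leqNgt ltn_ord.
rewrite lift0 /Icol subSS addnS E_shift //; apply/andP; split => //; exact: ltn_ord.
Qed.

Lemma detB (e : bool) r x s : is_partition (x :: s) -> size s = r -> x = (r.+1 + e)%N ->
  (\det (D e r.+1 (x :: s)) = \det (D e r (hook (x :: s))))%R.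
Proof.
move=> Hl Hs Hx; rewrite (expand_det_col _ ord_max) (bigD1 ord_max) //= big1 ?addr0; last first.
  move=> i Hi; rewrite mxE /Icol subSnn.
  have Hi' : (i : nat) < r by move: Hi (ltn_ord i); rewrite -val_eqE /=; lia.
  rewrite /E /part /=; case: ifP => [/eqP|_]; first lia.
  by case: ifP => [/eqP|_]; [lia| rewrite mul0r].
rewrite mxE /Icol subSnn /E /part /=.
case: ifP => [/eqP|_]; first lia.
rewrite ifT; last by apply/eqP; lia.
rewrite mul1r /cofactor /=.
have -> : ((-1) ^+ (r + r) = 1 :> int)%R by rewrite -signr_odd addnn odd_double.
rewrite mul1r; congr determinant; apply/matrixP => i j; rewrite !mxE.
have Hl' : forall k : 'I_r, (lift ord_max k : nat) = k by move=> k; rewrite /= /bump leqNgt ltn_ord.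
rewrite !Hl' /Icol (part_hook Hl); last by rewrite subn_gt0.
have Hj := ltn_ord j.
rewrite -(subSn (ltnW Hj)).
have Hp : 0 < part (x :: s) (r.+1 - j) by apply: part_pos => //=; lia.
rewrite -{1}(prednK Hp) addSn.
rewrite E_shift //; apply/andP; split => //; exact: ltn_ord.
Qed.

Lemma detC (e : bool) r lam : is_partition lam -> size lam = r.+1 -> part lam 1 <= r + e ->
  (\det (D e r.+1 lam) = 0)%R.
Proof.
move=> Hl Hs Hx; apply: (det_row0 (i := ord_max)) => j; rewrite mxE /E /=.
have Hj := ltn_ord j.
have H1 : 0 < part lam (r.+1 - j) by apply: part_pos => //; lia.
have H2 : part lam (r.+1 - j) <= part lam 1 by apply: part_le1; lia.
rewrite /Icol; case: ifP => [/eqP|_]; first lia.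
by case: ifP => [/eqP|_]; first lia.
Qed.

Lemma detD0 (e : bool) r lam : 0 < r -> part lam 1 = (r.+1 + e)%N -> (\det (D e r lam) = 0)%R.
Proof.
case: r => // r _ Hx; apply: (det_col0 (j := ord_max)) => i; rewrite mxE /E /= /Icol subSnn Hx.
have Hi := ltn_ord i.
case: ifP => [/eqP|_]; first lia.
by case: ifP => [/eqP|_]; first lia.
Qed.

Definition fexp (e : bool) lam := ((sumn lam + (if e then 0 else durfee lam)) %/ 2)%N.

Lemma binS2 r : 'C(r.+2, 2) = ('C(r.+1, 2) + r.+1)%N.
Proof. by rewrite binS bin1. Qed.

Lemma detD (e : bool) r lam : is_partition lam -> size lam <= r -> part lam 1 <= r + e ->
  (\det (D e r lam) = if all (condG e lam) (iota 1 (durfee lam))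
     then (-1) ^+ ('C(r.+1, 2) + fexp e lam) else 0)%R.
Proof.
elim: r lam => [|r IH] lam Hl Hs H1.
  case: lam Hl Hs H1 => // _ _ _; by rewrite det_mx00 /fexp /durfee /=; case: e.
have [Hs'|Hs'] := leqP (size lam) r.
  rewrite detA //.
  have [H1'|H1'] := leqP (part lam 1) (r + e).
    rewrite IH // binS2; case: ifP => _; last by rewrite mulr0.
    by rewrite -exprD; congr (GRing.exp _ _); lia.
  have Hr : 0 < r.
    rewrite lt0n; apply/eqP => Hr0; move: Hs' H1'; rewrite Hr0 leqn0 size_eq0 => /eqP ->.
    by rewrite /part /=; lia.
  rewrite detD0 ?mulr0 //; last by lia.
  case: lam Hl Hs Hs' H1 H1' => //= x s Hl _ Hs' _ H1'.
  rewrite all_cond_hook // ifF //; apply/andP => [[/eqP Hx _]]; move: H1'; rewrite /part /=; lia.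
have Hs2 : size lam = r.+1 by lia.
case: lam Hl Hs H1 Hs' Hs2 => // x s Hl _ H1 _ [Hs2].
have [Hx|Hx] := leqP x (r + e).
  rewrite detC //; last by rewrite /= Hs2.
  rewrite all_cond_hook // ifF //; apply/andP => [[/eqP Hx' _]]; lia.
have Hx2 : x = (r.+1 + e)%N by move: H1; rewrite /part /=; lia.
subst x; rewrite (detB Hl Hs2 erefl) IH //; first last.
- have Hh := part_le1 Hl (isT : 0 < 2).
  rewrite (part_hook Hl (isT : 0 < 1)); move: Hh; rewrite /part /=; lia.
- by have := size_hook (r.+1 + e :: s); rewrite /= Hs2.
- exact: hook_partition.
rewrite all_cond_hook // Hs2 eqxx /=; case: ifP => _ //.
rewrite -signr_odd -[in RHS]signr_odd; congr (GRing.exp _ _).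
have Hsum := sumn_hook Hl; have Hd := durfee_hook Hl.

have -> : fexp e (r.+1 + e :: s) = (fexp e (hook (r.+1 + e :: s)) + r.+1)%N.
  rewrite /fexp Hsum Hd Hs2; case: (e) => /=; lia.
set F := fexp e _; rewrite binS2.
have -> : ('C(r.+1, 2) + r.+1 + (F + r.+1) = ('C(r.+1, 2) + F) + (r.+1 + r.+1))%N by lia.
by rewrite [(r.+1 + r.+1)%N]addnn !oddD odd_double addbF.
Qed.

Lemma DeltaB r lam : Delta (Bmx r) lam = D false r lam.
Proof.
apply/matrixP => i j; rewrite !mxE; have Hi := ltn_ord i.
case: insubP => [c _ Hc|Hn].
  by rewrite mxE Hc /Bentry /E addn0.
rewrite /E; move: Hn; rewrite -leqNgt => Hn.
case: ifP => [/eqP|_]; first lia.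
by case: ifP => [/eqP|_]; first lia.
Qed.

Lemma DeltaC r lam : Delta (Cmx r) lam = D true r lam.
Proof.
apply/matrixP => i j; rewrite !mxE; have Hi := ltn_ord i.
have HH : (r - 1 + i.+1 + true)%N = (r + i.+1)%N by rewrite /=; lia.
case: insubP => [c _ Hc|Hn].
  by rewrite mxE Hc /Centry /E HH.
rewrite /E HH; move: Hn; rewrite -leqNgt => Hn.
case: ifP => [/eqP|_]; first lia.
by case: ifP => [/eqP|_]; first lia.
Qed.

Theorem mainTheorem6 (r : nat) (hr : (1 <= r)%N) :
  (forall lam : seq nat, is_partition lam -> (size lam <= r)%N -> (part lam 1 <= r)%N ->
     (\det (Delta (Bmx r) lam))%R =
       (if inR r lam then (-1) ^+ ('C(r.+1, 2) + (sumn lam + durfee lam) %/ 2)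
        else 0)%R)
  /\
  (forall lam : seq nat, is_partition lam -> (size lam <= r)%N -> (part lam 1 <= r.+1)%N ->
     (\det (Delta (Cmx r) lam))%R =
       (if inQ r lam then (-1) ^+ ('C(r.+1, 2) + sumn lam %/ 2) else 0)%R).
Proof.
split=> lam Hl Hs H1.
  rewrite DeltaB detD //; last by rewrite addn0.
  rewrite /inR Hs /= /fexp; congr (if _ then _ else _).
  by apply: eq_all => i; rewrite /condG addn0.
rewrite DeltaC detD //; last by rewrite addn1.
rewrite /inQ Hs /= /fexp addn0; congr (if _ then _ else _).
by apply: eq_all => i; rewrite /condG addn1.
Qed.
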